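(* Let $k$ be a finite field of odd characteristic, let $A(t)\in k[t]$ be a square-free polynomial of odd degree $d>1$, and let $f(x)\in k[x]$ be a cubic polynomial such that $y^2=f(x)$ is an elliptic curve over $k$. Let $E_A$ be the elliptic curve over $k(t)$ defined by $A(t)y^2=f(x)$. Let $(F,G)$ be a separable integral point on $E_A$. Then $G$ divides $F'$ and $d/3\leq \deg F < d-1$.
   Context: A separable integral point on $E_A$ is a pair $(F,G)$ with $F,G\in k[t]$, $A(t)G(t)^2=f(F(t))$, and $F'\neq 0$, where $F'$ is the derivative of $F$ with respect to $t$. *)

(* Defs.v *)
From HB Require Import structures.
From mathcomp Require Import all_boot all_order all_algebra all_field.
Set Implicit Arguments. Unset Strict Implicit. Unset Printing Implicit Defensive.
Import GRing.Theory.
Local Open Scope ring_scope.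

Definition squarefree_poly (R : idomainType) (p : {poly R}) : Prop :=
  p != 0 /\ forall g : {poly R}, g * g %| p -> (size g <= 1)%N.

(* y^2 = f(x) defines an elliptic curve (odd characteristic):
   f is a cubic with no repeated roots, i.e. separable. *)
Definition elliptic_cubic (k : fieldType) (f : {poly k}) : Prop :=
  size f = 4%N /\ separable_poly f.

Definition separable_integral_point (k : fieldType) (A f F G : {poly k}) : Prop :=
  A * G ^+ 2 = f \Po F /\ F^`() != 0.

(* Main.v *)
Require Import Defs.
From HB Require Import structures.
From mathcomp Require Import all_boot all_order all_algebra all_field.
From mathcomp Require Import zify.
Import GRing.Theory.
Local Open Scope ring_scope.

Theorem lemma3p2 (k : finFieldType) (A f F G : {poly k}) :
  (2%:R : k) != 0 ->
  squarefree_poly A ->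
  odd (size A).-1 -> (1 < (size A).-1)%N ->
  elliptic_cubic f ->
  separable_integral_point A f F G ->
  G %| F^`() /\
  ((size A).-1 <= 3 * (size F).-1)%N /\ ((size F).-1 < (size A).-1.-1)%N.
Proof.
move=> _ _ _ hd [sf sepf] [H dF].
have sF : (1 < size F)%N.
  rewrite ltnNge; apply/negP => /size1_polyC hc.
  by move: dF; rewrite hc derivC eqxx.
have szc : (size (f \Po F)).-1 = (3 * (size F).-1)%N by rewrite size_comp_poly sf.
have fF0 : f \Po F != 0.
  apply/negP => /eqP h; move: szc; rewrite h size_poly0 /=. move=> e; move: sF; case: (size F) e => [|[|n]] //.
have G0 : G != 0.
  by apply/negP => /eqP h; move: fF0; rewrite -H h expr0n /= mulr0 eqxx.
have A0 : A != 0.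
  by apply/negP => /eqP h; move: fF0; rewrite -H h mul0r eqxx.
have GdF : G %| F^`().
  have cop : coprimep (f \Po F) (f^`() \Po F).
    move: sepf; rewrite unlock; exact: coprimep_comp_poly.
  have Gd : G %| f \Po F by rewrite -H expr2 mulrA dvdp_mull.
  have cG := coprimep_dvdr Gd cop.
  rewrite -(Gauss_dvdpr _ cG) -deriv_comp -H derivM expr2 derivM.
  apply: dvdp_add; first by apply/dvdp_mull/dvdp_mulr.
  rewrite mulrDr; apply: dvdp_add; rewrite mulrA; [exact/dvdp_mull/dvdpp | exact/dvdp_mulr/dvdp_mull/dvdpp].
split=> //.
have sGF : (size G <= size F^`())%N by exact: dvdp_leq.
have F0 : F != 0 by rewrite -size_poly_gt0; lia.
have sdF := lt_size_deriv F0.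
have szA : size (A * G ^+ 2) = (size A + size G + size G).-2.
  rewrite expr2 mulrA size_mul ?mulf_neq0 // size_mul //.
  have gA : (0 < size A)%N by rewrite size_poly_gt0.
  have gG : (0 < size G)%N by rewrite size_poly_gt0.
  move: gA gG; rewrite -!subn1; clear; move: (size A) (size G) => a g; lia.
move: szc; rewrite -H szA.
have gA : (0 < size A)%N by rewrite size_poly_gt0.
have gG : (0 < size G)%N by rewrite size_poly_gt0.
move: gA gG sGF sdF sF hd; clear; move: (size A) (size G) (size F) (size F^`()) => a g n m; lia.
Qed.
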